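(* Let $n\ge 2$. Then $\mathrm{A}=\Gamma^{\overline{01}}=\Gamma^{\overline{23}}$, where for a subspace $L\subseteq\mathrm{C}$ we write $\Gamma^{L}=\{T\in\mathrm{C}^\times: T L T^{-1}\subseteq L\}$.
   Context: Let $\mathrm{C}$ be either the real Clifford algebra $C\ell_{p,q}$ with $p+q=n$, or the complex Clifford algebra $C\ell(\mathbb{C}^n)$. It has identity $e$ and generators $e_1,\dots,e_n$ satisfying $e_ae_b+e_be_a=2\eta_{ab}e$. In the real case $\eta=\mathrm{diag}(1,\dots,1,-1,\dots,-1)$ with $p$ entries $+1$ and $q$ entries $-1$. In the complex case $\eta=I_n$. $\mathrm{C}^k$ is the grade-$k$ subspace, spanned by the products $e_{a_1}\cdots e_{a_k}$ with $a_1<\dots<a_k$. The reversion $U\mapsto\tilde U$ is the linear anti-automorphism acting on $\mathrm{C}^k$ as multiplication by $(-1)^{k(k-1)/2}$. For $m=0,1,2,3$ let $\mathrm{C}^{\overline m}=\bigoplus_{k\equiv m \pmod 4}\mathrm{C}^k$, and $\mathrm{C}^{\overline{kl}}=\mathrm{C}^{\overline k}\oplus\mathrm{C}^{\overline l}$. $\Gamma^{\overline{kl}}$ denotes $\Gamma^{L}$ with $L=\mathrm{C}^{\overline{kl}}$. $\mathrm{C}^\times$ is the group of invertible elements of $\mathrm{C}$. $\mathrm{Z}$ is the center of $\mathrm{C}$: $\mathrm{Z}=\mathrm{C}^0$ for $n$ even and $\mathrm{Z}=\mathrm{C}^0\oplus\mathrm{C}^n$ for $n$ odd. $\mathrm{Z}^\times$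 is the set of invertible elements of $\mathrm{Z}$. Define $\mathrm{A}:=\{T\in\mathrm{C}^\times:\ \tilde T T\in\mathrm{Z}^\times\}$. *)

(* Defs.v *)
From HB Require Import structures.
From mathcomp Require Import all_boot all_order all_algebra.
From mathcomp Require Import reals complex.
Set Implicit Arguments. Unset Strict Implicit. Unset Printing Implicit Defensive.
Import Order.TTheory GRing.Theory Num.Theory.
Local Open Scope ring_scope.

Section Clifford.
Variables (K : fieldType) (n : nat) (eta : 'I_n -> K).

(* An element U = sum_A U_A e_A of the Clifford algebra, A ranging over the
   subsets of {0..n-1}; e_A = e_{a_1} ... e_{a_k} with a_1 < ... < a_k. *)
Definition cl := {ffun {set 'I_n} -> K}.

Definition cl_add (x y : cl) : cl := [ffun A : {set 'I_n} => x A + y A].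
Definition cl_scale (a : K) (x : cl) : cl := [ffun A : {set 'I_n} => a * x A].

Definition blade (A : {set 'I_n}) : cl := [ffun B : {set 'I_n} => (B == A)%:R].
Definition cl_one : cl := blade set0.

Definition symdiff (A B : {set 'I_n}) : {set 'I_n} := (A :\: B) :|: (B :\: A).

(* e_A e_B = (-1)^{#{(a,b) in A x B | b < a}} (prod_{i in A /\ B} eta_i) e_{A symdiff B} *)
Definition blade_sign (A B : {set 'I_n}) : K :=
  (-1) ^+ #|[set ab : 'I_n * 'I_n | [&& ab.1 \in A, ab.2 \in B & (ab.2 < ab.1)%N]]|.
Definition blade_metric (A B : {set 'I_n}) : K := \prod_(i in A :&: B) eta i.

Definition cl_mul (x y : cl) : cl :=
  [ffun C : {set 'I_n} => \sum_(A : {set 'I_n}) \sum_(B : {set 'I_n} | symdiff A B == C)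
               x A * y B * blade_sign A B * blade_metric A B].

Definition cl_rev (x : cl) : cl := [ffun A : {set 'I_n} => (-1) ^+ 'C(#|A|, 2) * x A].

Definition in_grades (P : pred nat) (x : cl) : Prop :=
  forall A : {set 'I_n}, x A != 0 -> P #|A|.

(* C^{\bar m} (+) C^{\bar l}: grades k with k = m or k = l mod 4 *)
Definition in_grades_mod4 (m l : nat) : cl -> Prop :=
  in_grades (fun k => (k %% 4 == m) || (k %% 4 == l))%N.

Definition cl_inverse (x S : cl) : Prop := cl_mul x S = cl_one /\ cl_mul S x = cl_one.
Definition cl_invertible (x : cl) : Prop := exists S, cl_inverse x S.

Definition in_center_Z (x : cl) : Prop :=
  if odd n then in_grades (fun k => (k == 0) || (k == n))%N x
  else in_grades (fun k => k == 0)%N x.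
Definition in_Zunits (x : cl) : Prop := in_center_Z x /\ cl_invertible x.

Definition in_A (T : cl) : Prop := cl_invertible T /\ in_Zunits (cl_mul (cl_rev T) T).

Definition in_Gamma (L : cl -> Prop) (T : cl) : Prop :=
  exists S, cl_inverse T S /\ forall U, L U -> L (cl_mul (cl_mul T U) S).

End Clifford.

Definition eta_pq (R : fieldType) (n p : nat) (i : 'I_n) : R :=
  if (i < p)%N then 1 else -1.

Definition A_eq_Gammas (K : fieldType) (n : nat) (eta : 'I_n -> K) : Prop :=
  forall T : cl K n,
    (in_A eta T <-> in_Gamma eta (in_grades_mod4 0 1) T) /\
    (in_A eta T <-> in_Gamma eta (in_grades_mod4 2 3) T).

(* Main.v *)
Require Import Defs.
From HB Require Import structures.
From mathcomp Require Import all_boot all_order all_algebra.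
From mathcomp Require Import reals complex.
From mathcomp Require Import zify ring.
Set Implicit Arguments. Unset Strict Implicit. Unset Printing Implicit Defensive.
Import Order.TTheory GRing.Theory Num.Theory.
Local Open Scope ring_scope.

Lemma bin2D (m k : nat) : 'C(m + k, 2) = ('C(m, 2) + 'C(k, 2) + m * k)%N.
Proof.
elim: k => [|k IH]; first by rewrite addn0 muln0 bin0n !addn0.
rewrite addnS binS IH bin1 binS bin1; lia.
Qed.

Lemma odd_bin2_mod4 (k : nat) : odd 'C(k, 2) = ((k %% 4 == 2) || (k %% 4 == 3))%N.
Proof.
rewrite {1}(divn_eq k 4) bin2D.
have h4 : forall q, ~~ odd 'C(q * 4, 2).
  move=> q; have -> : (q * 4 = q.*2 + q.*2)%N by rewrite -addnn; lia.
  by rewrite bin2D !oddD addbb /= oddM odd_double.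
rewrite !oddD (negbTE (h4 _)) /= oddM (oddM (k %/ 4)) /= andbF andFb addbF.
have : (k %% 4 < 4)%N by rewrite ltn_mod.
by case: (k %% 4)%N => [|[|[|[|]]]].
Qed.

Section Gen.
Variables (K : fieldType) (n : nat) (eta : 'I_n -> K).
Local Notation cl := (cl K n).
Local Notation sd := (@symdiff n).

Lemma in_sd (A B : {set 'I_n}) x : (x \in sd A B) = (x \in A) (+) (x \in B).
Proof. by rewrite /symdiff !inE; case: (x \in A); case: (x \in B). Qed.

Lemma sdC (A B : {set 'I_n}) : sd A B = sd B A.
Proof. by apply/setP=> x; rewrite !in_sd addbC. Qed.
Lemma sdA (A B C : {set 'I_n}) : sd (sd A B) C = sd A (sd B C).
Proof. by apply/setP=> x; rewrite !in_sd addbA. Qed.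
Lemma sdK (A B : {set 'I_n}) : sd (sd A B) B = A.
Proof. by apply/setP=> x; rewrite !in_sd -addbA addbb addbF. Qed.
Lemma sdKl (A B : {set 'I_n}) : sd A (sd A B) = B.
Proof. by apply/setP=> x; rewrite !in_sd addbA addbb. Qed.
Lemma sd0 (A : {set 'I_n}) : sd A set0 = A.
Proof. by apply/setP=> x; rewrite !in_sd inE addbF. Qed.
Lemma sd0l (A : {set 'I_n}) : sd set0 A = A.
Proof. by apply/setP=> x; rewrite !in_sd inE. Qed.
Lemma sd_eq (A B C : {set 'I_n}) : (sd A B == C) = (A == sd C B).
Proof. by apply/eqP/eqP=> [<-|->]; rewrite sdK. Qed.

Lemma sgn_card (T : finType) (S : {set T}) :
  (-1) ^+ #|S| = \prod_(t : T) (if t \in S then -1 else 1) :> K.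
Proof. by rewrite -prodr_const big_mkcond. Qed.

Definition F1 (b : bool) : K := if b then -1 else 1.
Lemma F1_sq b : F1 b * F1 b = 1.
Proof. by case: b; rewrite /F1 ?mulrNN mulr1. Qed.
Lemma F1_add b c : F1 (b (+) c) = F1 b * F1 c.
Proof. by case: b; case: c; rewrite /F1 /= ?mulrNN ?mulr1 ?mul1r. Qed.

Lemma signE (A B : {set 'I_n}) : blade_sign K A B =
  \prod_(ab : 'I_n * 'I_n) F1 [&& ab.1 \in A, ab.2 \in B & (ab.2 < ab.1)%N].
Proof. by rewrite /blade_sign sgn_card; apply: eq_bigr => ab _; rewrite inE. Qed.

Lemma metricE (A B : {set 'I_n}) : blade_metric eta A B =
  \prod_(i : 'I_n) (if (i \in A) && (i \in B) then eta i else 1).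
Proof. by rewrite /blade_metric big_mkcond; apply: eq_bigr => i _; rewrite inE. Qed.

Definition w (A B : {set 'I_n}) := blade_sign K A B * blade_metric eta A B.

Lemma w_assoc (A B C : {set 'I_n}) : w A B * w (sd A B) C = w B C * w A (sd B C).
Proof.
rewrite /w !signE !metricE.
rewrite mulrACA -big_split /= -big_split /= [RHS]mulrACA -big_split /= -big_split /=.
congr (_ * _); apply: eq_bigr => i _; rewrite ?in_sd.
- by case: (i.1 \in A); case: (i.2 \in B); case: (i.1 \in B); case: (i.2 \in C);
     case: (i.2 < i.1)%N; rewrite /F1 /= ?mulrNN ?mulr1 ?mul1r ?mulN1r.
- by case: (i \in A); case: (i \in B); case: (i \in C); rewrite /= ?mulr1 ?mul1r.
Qed.

Lemma sgn_cardF (T : finType) (S : {set T}) :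
  (-1) ^+ #|S| = \prod_(t : T) F1 (t \in S).
Proof. exact: sgn_card. Qed.

Lemma sign_swap (A B : {set 'I_n}) :
  blade_sign K A B * blade_sign K B A = (-1) ^+ (#|A| * #|B| + #|A :&: B|).
Proof.
rewrite !signE (reindex_inj (h := fun ab : 'I_n * 'I_n => (ab.2, ab.1))); last first.
  by case=> [a b] [c d] /= [-> ->].
rewrite exprD mulnC -cardsX !sgn_cardF -big_split /=.
have -> : \prod_(t : 'I_n) F1 (t \in A :&: B) =
   \prod_(ab : 'I_n * 'I_n) F1 [&& ab.2 \in A, ab.1 \in B & ab.1 == ab.2].
  rewrite -(pair_bigA _ (fun x y => F1 [&& y \in A, x \in B & x == y])) /=; apply: eq_bigr => i _.
  rewrite (bigD1 i) //= eqxx andbT inE andbC big1 ?mulr1 // => j /negbTE ji.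
  by rewrite eq_sym ji !andbF.
rewrite -big_split /=; apply: eq_bigr => -[x y] _; rewrite /= inE.
case: (ltngtP (x : nat) (y : nat)) => h.
- have xy : (x == y) = false by apply/eqP => e; rewrite e ltnn in h.
  have yx : ((y : nat) < x)%N = false by rewrite ltnNge ltnW.
  rewrite /= xy; case: (x \in A); case: (y \in A); case: (x \in B); case: (y \in B);
    by rewrite /F1 /= ?mulr1 ?mul1r ?mulrNN.
- have xy : (x == y) = false by apply/eqP => e; rewrite e ltnn in h.
  have yx : ((x : nat) < y)%N = false by rewrite ltnNge ltnW.
  rewrite /= xy; case: (x \in A); case: (y \in A); case: (x \in B); case: (y \in B);
    by rewrite /F1 /= ?mulr1 ?mul1r ?mulrNN.
- have e : x = y := ord_inj h.
  subst y. rewrite /= eqxx /F1.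
  case: (x \in A).
  all: case: (x \in B).
  all: by rewrite /= ?mulrNN ?mulr1 ?mul1r.
Qed.

Local Notation mul := (cl_mul eta).

Lemma mulE (x y : cl) (C : {set 'I_n}) :
  mul x y C = \sum_A \sum_B (sd A B == C)%:R * (x A * y B * w A B).
Proof.
rewrite ffunE; apply: eq_bigr => A _; rewrite big_mkcond; apply: eq_bigr => B _.
by case: eqP => _; rewrite ?mul1r ?mul0r // /w !mulrA.
Qed.

Lemma sum1 (F : {set 'I_n} -> K) (a : {set 'I_n}) : \sum_C (a == C)%:R * F C = F a.
Proof.
rewrite (bigD1 a) //= eqxx mul1r big1 ?addr0 // => C /negbTE.
by rewrite eq_sym => ->; rewrite mul0r.
Qed.

Lemma dsuml (f : {set 'I_n} -> {set 'I_n} -> K) c :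
  (\sum_A \sum_B f A B) * c = \sum_A \sum_B (f A B * c).
Proof. by rewrite mulr_suml; apply: eq_bigr => A _; rewrite mulr_suml. Qed.
Lemma dsumr (f : {set 'I_n} -> {set 'I_n} -> K) c :
  c * (\sum_A \sum_B f A B) = \sum_A \sum_B (c * f A B).
Proof. by rewrite mulr_sumr; apply: eq_bigr => A _; rewrite mulr_sumr. Qed.

Lemma mul_assoc (x y z : cl) : mul (mul x y) z = mul x (mul y z).
Proof.
apply/ffunP => D; rewrite !mulE.
transitivity (\sum_A \sum_B \sum_E (sd (sd A B) E == D)%:R *
   (x A * y B * z E * (w A B * w (sd A B) E))).
  under eq_bigr => C _ do under eq_bigr => E _ do rewrite mulE dsuml dsuml dsumr.
  under eq_bigr => C _ do rewrite exchange_big.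
  under eq_bigr => C _ do under eq_bigr => A _ do rewrite exchange_big.
  rewrite exchange_big.
  under eq_bigr => A _ do rewrite exchange_big.
  under eq_bigr => A _ do under eq_bigr => B _ do rewrite exchange_big.
  apply: eq_bigr => A _; apply: eq_bigr => B _; apply: eq_bigr => E _.
  rewrite (eq_bigr (fun C => (sd A B == C)%:R * ((sd C E == D)%:R *
     (x A * y B * z E * (w A B * w C E))))); first by rewrite sum1.
  by move=> C _; ring.
symmetry.
under eq_bigr => A _ do under eq_bigr => F _ do rewrite mulE dsumr dsuml dsumr.
under eq_bigr => A _ do rewrite exchange_big.
under eq_bigr => A _ do under eq_bigr => B _ do rewrite exchange_big.
apply: eq_bigr => A _; apply: eq_bigr => B _; apply: eq_bigr => E _.
rewrite (eq_bigr (fun F => (sd B E == F)%:R * ((sd A F == D)%:R *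
     (x A * y B * z E * (w B E * w A F))))); last by move=> F _; ring.
rewrite sum1 sdA w_assoc; ring.
Qed.

Lemma sign_sq (A B : {set 'I_n}) : blade_sign K A B * blade_sign K A B = 1.
Proof. by rewrite signE -big_split /= big1 // => ab _; rewrite F1_sq. Qed.

Lemma metric_sym (A B : {set 'I_n}) : blade_metric eta A B = blade_metric eta B A.
Proof. by rewrite /blade_metric setIC. Qed.

Lemma sign0l (B : {set 'I_n}) : blade_sign K set0 B = 1.
Proof. by rewrite signE big1 // => ab _; rewrite inE. Qed.
Lemma sign0r (A : {set 'I_n}) : blade_sign K A set0 = 1.
Proof. by rewrite signE big1 // => ab _; rewrite inE andbF. Qed.
Lemma metric0l (B : {set 'I_n}) : blade_metric eta set0 B = 1.
Proof. by rewrite metricE big1 // => i _; rewrite inE. Qed.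
Lemma metric0r (A : {set 'I_n}) : blade_metric eta A set0 = 1.
Proof. by rewrite metricE big1 // => i _; rewrite inE andbF. Qed.
Lemma w0l (B : {set 'I_n}) : w set0 B = 1.
Proof. by rewrite /w sign0l metric0l mulr1. Qed.
Lemma w0r (A : {set 'I_n}) : w A set0 = 1.
Proof. by rewrite /w sign0r metric0r mulr1. Qed.

Lemma sign_swap' (A B : {set 'I_n}) :
  blade_sign K B A = blade_sign K A B * (-1) ^+ (#|A| * #|B| + #|A :&: B|).
Proof. by rewrite -sign_swap mulrA sign_sq mul1r. Qed.

Lemma w_sym (A B : {set 'I_n}) : ~~ odd (#|A| * #|B| + #|A :&: B|) -> w A B = w B A.
Proof.
move=> h; rewrite /w (sign_swap' A B) (metric_sym B A) -signr_odd (negbTE h) expr0 mulr1.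
reflexivity.
Qed.

Lemma sign_eq1 m : (2 : K) != 0 -> (-1) ^+ m = 1 :> K -> ~~ odd m.
Proof.
move=> h2; rewrite -signr_odd; case: (odd m) => //= e.
have : (1 : K) + 1 = 0 by rewrite -{1}e addNr.
by rewrite -mulr2n => /eqP; rewrite (negbTE h2).
Qed.

Lemma w_sym_inv (A B : {set 'I_n}) : (2 : K) != 0 -> (forall i, eta i != 0) ->
  w A B = w B A -> ~~ odd (#|A| * #|B| + #|A :&: B|).
Proof.
move=> h2 he; rewrite /w (sign_swap' A B) (metric_sym B A) => e.
have hm : blade_metric eta A B != 0 by apply/prodf_neq0 => i _.
have e2 : blade_sign K A B = blade_sign K A B * (-1) ^+ (#|A| * #|B| + #|A :&: B|).
  exact: (mulIf hm e).
apply: sign_eq1 => //.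
have : blade_sign K A B * blade_sign K A B =
   blade_sign K A B * (blade_sign K A B * (-1) ^+ (#|A| * #|B| + #|A :&: B|)) by rewrite -e2.
by rewrite mulrA sign_sq mul1r.
Qed.

Lemma sum1r (F : {set 'I_n} -> K) (a : {set 'I_n}) : \sum_C (C == a)%:R * F C = F a.
Proof. by under eq_bigr => C _ do rewrite eq_sym; rewrite sum1. Qed.

Lemma sd_eq' (A B C : {set 'I_n}) : (sd A B == C) = (B == sd A C).
Proof. by rewrite sdC sd_eq sdC. Qed.

Lemma bladeE (B A : {set 'I_n}) : blade K B A = (A == B)%:R.
Proof. by rewrite ffunE. Qed.

Lemma mul_blade_r (X : cl) (B C : {set 'I_n}) : mul X (blade K B) C = X (sd C B) * w (sd C B) B.
Proof.
rewrite mulE.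
rewrite (eq_bigr (fun A => (sd A B == C)%:R * (X A * w A B))); last first.
  move=> A _; rewrite (eq_bigr (fun D => (B == D)%:R * ((sd A D == C)%:R * (X A * w A D)))).
    by rewrite sum1.
  by move=> D _; rewrite bladeE [D == B]eq_sym; ring.
under eq_bigr => A _ do rewrite sd_eq.
by rewrite sum1r.
Qed.

Lemma mul_blade_l (X : cl) (B C : {set 'I_n}) : mul (blade K B) X C = X (sd B C) * w B (sd B C).
Proof.
rewrite mulE.
rewrite (eq_bigr (fun A => (B == A)%:R * \sum_D ((sd A D == C)%:R * (X D * w A D)))); last first.
  by move=> A _; rewrite mulr_sumr; apply: eq_bigr => D _; rewrite bladeE [A == B]eq_sym; ring.
rewrite sum1; under eq_bigr => D _ do rewrite sd_eq'.
by rewrite sum1r.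
Qed.

Lemma clmul1l (x : cl) : mul (cl_one K n) x = x.
Proof. by apply/ffunP => C; rewrite mul_blade_l sd0l w0l mulr1. Qed.
Lemma clmul1r (x : cl) : mul x (cl_one K n) = x.
Proof. by apply/ffunP => C; rewrite mul_blade_r sd0 w0r mulr1. Qed.

Lemma comm_w (X U : cl) : (forall A B, X A != 0 -> w A B = w B A) -> mul X U = mul U X.
Proof.
move=> h; apply/ffunP => C; rewrite !mulE [RHS]exchange_big /=.
apply: eq_bigr => A _; apply: eq_bigr => B _.
have [->|nz] := eqVneq (X A) 0; first by rewrite !(mul0r, mulr0).
by rewrite (h A B nz) sdC; ring.
Qed.

Lemma card_sd (A B : {set 'I_n}) : (#|sd A B| + #|A :&: B| + #|A :&: B| = #|A| + #|B|)%N.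
Proof.
have dj : (A :\: B) :&: (B :\: A) = set0.
  by apply/setP => x; rewrite !inE; case: (x \in A); case: (x \in B).
have := cardsUI (A :\: B) (B :\: A); rewrite dj cards0 addn0 => h.
rewrite /symdiff h.
have := cardsID B A; have := cardsID A B; rewrite setIC; lia.
Qed.

Lemma odd_bin2_sd (a b c k : nat) : (c + k + k = a + b)%N ->
  odd 'C(c, 2) = odd ('C(a, 2) + 'C(b, 2) + (a * b + k)).
Proof.
move=> h.
have e1 := bin2D a b.
have e2 := bin2D c (k + k).
have e3 := bin2D k k.
rewrite -h -addnA in e1.
rewrite e1 e3 in e2.
move: e2 => /(congr1 odd); rewrite !oddD !oddM !oddD addbb /= !andbb => e.
rewrite ?oddD ?oddM addbA e.
by case: (odd (binomial c 2)); case: (odd k); case: (odd c).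
Qed.

Local Notation rev := (@cl_rev K n).

Lemma revE (x : cl) A : rev x A = (-1) ^+ 'C(#|A|, 2) * x A.
Proof. by rewrite ffunE. Qed.

Lemma key_rev (A B : {set 'I_n}) :
  (-1) ^+ 'C(#|sd A B|, 2) * w A B = (-1) ^+ 'C(#|A|, 2) * (-1) ^+ 'C(#|B|, 2) * w B A.
Proof.
rewrite /w (sign_swap' A B) (metric_sym B A).
rewrite -[(-1) ^+ 'C(#|sd A B|, 2)]signr_odd (odd_bin2_sd (card_sd A B)) signr_odd !exprD.
have := sign_sq A B; move: (blade_sign K A B) => s hs.
ring.
Qed.

Lemma rev_mul (x y : cl) : rev (mul x y) = mul (rev y) (rev x).
Proof.
apply/ffunP => C; rewrite revE !mulE dsumr [RHS]exchange_big /=.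
apply: eq_bigr => A _; apply: eq_bigr => B _; rewrite !revE (sdC B A).
have [<-|ne] := eqVneq (sd A B) C; last by rewrite !mul0r mulr0.
rewrite !mul1r.
have := key_rev A B => k.
transitivity (x A * y B * ((-1) ^+ 'C(#|sd A B|, 2) * w A B)); first by ring.
rewrite k; ring.
Qed.

Lemma rev_rev (x : cl) : rev (rev x) = x.
Proof.
by apply/ffunP => A; rewrite !revE mulrA -expr2 sqrr_sign mul1r.
Qed.

Lemma rev_one : rev (cl_one K n) = cl_one K n.
Proof.
apply/ffunP => A; rewrite revE /cl_one bladeE.
by case: eqP => [->|_]; rewrite ?cards0 ?expr0 ?mul1r ?mulr0.
Qed.

Local Notation scale := (@cl_scale K n).

Lemma scaleE a (x : cl) A : scale a x A = a * x A.
Proof. by rewrite ffunE. Qed.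
Lemma scale1 (x : cl) : scale 1 x = x.
Proof. by apply/ffunP => A; rewrite scaleE mul1r. Qed.
Lemma mul_scalel a (x y : cl) : mul (scale a x) y = scale a (mul x y).
Proof.
apply/ffunP => C; rewrite scaleE !mulE dsumr; apply: eq_bigr => A _; apply: eq_bigr => B _.
by rewrite scaleE; ring.
Qed.
Lemma mul_scaler a (x y : cl) : mul x (scale a y) = scale a (mul x y).
Proof.
apply/ffunP => C; rewrite scaleE !mulE dsumr; apply: eq_bigr => A _; apply: eq_bigr => B _.
by rewrite scaleE; ring.
Qed.
Lemma scale_inj a (x y : cl) : a != 0 -> scale a x = scale a y -> x = y.
Proof.
move=> ha e; apply/ffunP => A; have := congr1 (fun f : cl => f A) e.
by rewrite !scaleE => /(mulfI ha).
Qed.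
Lemma rev_scale a (x : cl) : rev (scale a x) = scale a (rev x).
Proof. by apply/ffunP => A; rewrite !(revE, scaleE); ring. Qed.

Lemma rev_eq_scale e (U : cl) :
  rev U = scale e U <-> forall A, U A != 0 -> (-1) ^+ 'C(#|A|, 2) = e.
Proof.
split.
  move=> h A nz; have := congr1 (fun f : cl => f A) h; rewrite revE scaleE.
  by move/(mulIf nz).
move=> h; apply/ffunP => A; rewrite revE scaleE.
have [->|nz] := eqVneq (U A) 0; first by rewrite !mulr0.
by rewrite (h A nz).
Qed.

Hypothesis two_nz : (2 : K) != 0.

Lemma m1_neq1 : (-1 : K) != 1.
Proof.
apply/eqP => e; have : (1 : K) + 1 = 0 by rewrite -{1}e addNr.
by rewrite -mulr2n => /eqP; rewrite (negbTE two_nz).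
Qed.

Lemma sign_bin2 (k : nat) :
  ((-1) ^+ 'C(k, 2) = 1 :> K <-> ((k %% 4 == 0) || (k %% 4 == 1))%N) /\
  ((-1) ^+ 'C(k, 2) = -1 :> K <-> ((k %% 4 == 2) || (k %% 4 == 3))%N).
Proof.
rewrite -signr_odd odd_bin2_mod4.
have : (k %% 4 < 4)%N by rewrite ltn_mod.
have h1 := m1_neq1; have h2 : (1 : K) != -1 by rewrite eq_sym.
case: (k %% 4)%N => [|[|[|[|]]]] //= _; rewrite ?expr0 ?expr1; split; split => // /eqP;
  by rewrite ?(negbTE h1) ?(negbTE h2).
Qed.

Lemma grade01 (U : cl) : in_grades_mod4 0 1 U <-> rev U = scale 1 U.
Proof.
rewrite rev_eq_scale; split => h A /h; by case: (sign_bin2 #|A|) => [[? ?] _].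
Qed.

Lemma grade23 (U : cl) : in_grades_mod4 2 3 U <-> rev U = scale (-1) U.
Proof.
rewrite rev_eq_scale; split => h A /h; by case: (sign_bin2 #|A|) => [_ [? ?]].
Qed.

Lemma card_full (A : {set 'I_n}) : #|A| = n -> A = setT.
Proof.
move=> h; apply/eqP; rewrite eqEcard subsetT cardsT card_ord h leqnn. by [].
Qed.

Lemma center_of (X : cl) :
  (forall A, X A != 0 -> #|A| = 0%N \/ (#|A| = n /\ odd n)) -> in_center_Z X.
Proof.
move=> h; rewrite /in_center_Z; case: ifP => on A /h [->|[-> o]] //=.
  by rewrite eqxx orbT.
by rewrite o in on.
Qed.

Lemma center_comm (X U : cl) : in_center_Z X -> mul X U = mul U X.
Proof.
move=> hz; apply: comm_w => A B nz.
have [A0|[An on]] : #|A| = 0%N \/ (#|A| = n /\ odd n).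
  move: hz; rewrite /in_center_Z; case: ifP => on /(_ A nz).
    by case/orP => /eqP; auto.
  by move/eqP; auto.
  by rewrite (cards0_eq A0) w0l w0r.
apply: w_sym; rewrite (card_full An) setTI cardsT card_ord.
by rewrite -{2}(mul1n #|B|) -mulnDl oddM oddD on.
Qed.

Hypothesis eta_nz : forall i, eta i != 0.

Lemma commute_blade (X : cl) B A : mul X (blade K B) = mul (blade K B) X -> X A != 0 ->
  ~~ odd (#|A| * #|B| + #|A :&: B|).
Proof.
move=> e nz; have := congr1 (fun f : cl => f (sd A B)) e.
rewrite mul_blade_r mul_blade_l sdK (sdC A B) sdKl => /(mulfI nz) ew.
exact: w_sym_inv.
Qed.

Lemma center_grade1 (X : cl) :
  (forall i : 'I_n, mul X (blade K [set i]) = mul (blade K [set i]) X) -> in_center_Z X.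
Proof.
move=> h; apply: center_of => A nz.
have [A0|[i iA]] := set_0Vmem A; first by left; rewrite A0 cards0.
have oA : odd #|A|.
  have := commute_blade (h i) nz.
  rewrite cards1 muln1 (setIidPr _) ?sub1set // cards1 addn1 /=.
  by rewrite negbK.
right.
have AT : A = setT.
  apply/setP => j; rewrite inE; case: (boolP (j \in A)) => // jA; exfalso.
  have := commute_blade (h j) nz.
  have -> : A :&: [set j] = set0.
    by apply/setP => k; rewrite !inE; case: eqP => [->|]; rewrite ?andbF // (negbTE jA).
  by rewrite cards0 cards1 muln1 addn0 oA.
by move: oA; rewrite AT cardsT card_ord.
Qed.

Lemma widen_inj m (h : (m <= n)%N) : injective (@widen_ord m n h).
Proof. by move=> a b /(congr1 val) /= /val_inj. Qed.

Lemma center_grade23 (X : cl) : rev X = X ->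
  (forall B : {set 'I_n}, (#|B| = 2 \/ #|B| = 3)%N -> mul X (blade K B) = mul (blade K B) X) ->
  in_center_Z X.
Proof.
move=> hr h; apply: center_of => A nz.
have [A0|[i iA]] := set_0Vmem A; first by left; rewrite A0 cards0.
have AT : A = setT.
  apply/setP => j; rewrite inE; case: (boolP (j \in A)) => // jA; exfalso.
  have ij : i != j by apply/eqP => e; move: jA; rewrite -e iA.
  have c2 : #|[set i; j]| = 2%N by rewrite cards2 ij.
  have := commute_blade (h [set i; j] (or_introl c2)) nz.
  have -> : A :&: [set i; j] = [set i].
    apply/setP => k; rewrite !inE; case: (eqVneq k i) => [->|ki]; first by rewrite iA.
    by case: (eqVneq k j) => [->|kj]; rewrite ?(negbTE jA) ?andbF.
  by rewrite cards1 cards2 ij oddD oddM /= andbF.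
subst A; rewrite cardsT card_ord.
case on: (odd n); first by right.
have [n0|npos] := eqVneq n 0%N; first by left.
exfalso.
have hs : (-1) ^+ 'C(n, 2) = 1 :> K.
  have := (rev_eq_scale 1 X).1; rewrite scale1 => /(_ hr _ nz).
  by rewrite cardsT card_ord.
have := (sign_bin2 n).1.1 hs => h4.
have n3 : (3 <= n)%N.
  have := divn_eq n 4; move: h4 on npos; rewrite -[odd n]/(odd n).
  move=> h4 on npos; move: (divn_eq n 2) => _.
  case/orP: h4 => /eqP h4.
    have : (0 < n %/ 4)%N.
      rewrite divn_gt0 //; apply: contraNT npos; rewrite -ltnNge => lt4.
      by rewrite -(modn_small lt4) h4.
    lia.
  by move: on; rewrite {1}(divn_eq n 4) h4 oddD oddM /= andbF.
pose B3 := [set widen_ord n3 k | k : 'I_3].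
have cB : #|B3| = 3 by rewrite card_imset ?card_ord //; exact: widen_inj.
have := commute_blade (h B3 (or_intror cB)) nz.
by rewrite setTI cardsT card_ord cB oddD oddM on /=.
Qed.

Lemma blade_grades (P : pred nat) (B : {set 'I_n}) : P #|B| -> in_grades P (blade K B).
Proof. by move=> hP A; rewrite bladeE; case: (eqVneq A B) => [-> //|_]; rewrite eqxx. Qed.

Lemma cancel_l (a b c : cl) : mul a b = cl_one K n -> mul a (mul b c) = c.
Proof. by move=> h; rewrite -mul_assoc h clmul1l. Qed.

Lemma rev_inv (T S : cl) : cl_inverse eta T S -> cl_inverse eta (rev T) (rev S).
Proof.
by case=> h1 h2; split; rewrite -rev_mul ?h1 ?h2 rev_one.
Qed.

Section Main.
Variables (L : cl -> Prop) (e : K).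
Hypothesis e_nz : e != 0.
Hypothesis hL : forall U, L U <-> rev U = scale e U.

Lemma Gamma_comm (T : cl) : in_Gamma eta L T ->
  cl_invertible eta (mul (rev T) T) /\ forall U, L U -> mul (mul (rev T) T) U = mul U (mul (rev T) T).
Proof.
case=> S [[hTS hST] hG]; have [hTS' hST'] := rev_inv (conj hTS hST).
split.
  exists (mul S (rev S)); split; rewrite !mul_assoc.
    by rewrite (cancel_l _ hTS) hTS'.
  by rewrite (cancel_l _ hST') hST.
move=> U LU.
have E : mul (rev S) (mul U (rev T)) = mul (mul T U) S.
  have := (hL _).1 (hG U LU); rewrite !rev_mul ((hL U).1 LU) mul_scalel mul_scaler.
  by move/(scale_inj e_nz).
have := congr1 (fun V => mul (rev T) (mul V T)) E; rewrite /= !mul_assoc.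
by rewrite (cancel_l _ hTS') hST clmul1r => ->.
Qed.

Lemma A_Gamma (T : cl) : in_A eta T -> in_Gamma eta L T.
Proof.
case=> [[S [hTS hST]] [hz [Y [hXY hYX]]]].
have [hTS' hST'] := rev_inv (conj hTS hST).
set X := mul (rev T) T in hz hXY hYX.
have cX : forall W, mul X W = mul W X by move=> W; exact: center_comm.
have cY : forall W, mul Y W = mul W Y.
  move=> W; transitivity (mul Y (mul (mul W X) Y)); first by rewrite mul_assoc hXY clmul1r.
  by rewrite -cX mul_assoc (cancel_l _ hYX).
have eT : rev T = mul X S by rewrite /X mul_assoc hTS clmul1r.
have eS : rev S = mul T Y.
  have -> : T = mul (rev S) X by rewrite /X -mul_assoc hST' clmul1l.
  by rewrite mul_assoc hXY clmul1r.
exists S; split => // U LU; apply/hL.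
rewrite !rev_mul ((hL U).1 LU) mul_scalel mul_scaler; congr (scale e _).
rewrite eT eS !mul_assoc; congr (mul T _).
by rewrite hTS clmul1r eT -(mul_assoc U X S) -cX mul_assoc (cancel_l _ hYX).
Qed.
End Main.

Theorem gen_main : A_eq_Gammas eta.
Proof.
have e1 : (1 : K) != 0 := oner_neq0 _.
have e2 : (-1 : K) != 0 by rewrite oppr_eq0.
move=> T; split; split.
- exact: (A_Gamma grade01).
- move=> hG; have [hinv hc] := Gamma_comm e1 grade01 hG.
  split; first by case: hG => S [hS _]; exists S.
  split => //; apply: center_grade1 => i; apply: hc.
  by apply: blade_grades; rewrite cards1.
- exact: (A_Gamma grade23).
- move=> hG; have [hinv hc] := Gamma_comm e2 grade23 hG.
  split; first by case: hG => S [hS _]; exists S.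
  split => //; apply: center_grade23.
    by rewrite rev_mul rev_rev.
  move=> B hB; apply: hc; apply: blade_grades.
  by case: hB => ->.
Qed.
End Gen.

Theorem mainTheorem6 (R : realType) (n p q : nat) :
  (2 <= n)%N -> (p + q)%N = n ->
  A_eq_Gammas (@eta_pq R n p) /\ A_eq_Gammas (fun _ : 'I_n => (1 : R[i])).
Proof.
move=> _ _; split.
- apply: gen_main; first by rewrite pnatr_eq0.
  by move=> i; rewrite /eta_pq; case: ifP => _; rewrite ?oppr_eq0 oner_eq0.
- apply: gen_main; first by rewrite pnatr_eq0.
  by move=> i; rewrite oner_eq0.
Qed.
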